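(* Let $G$ be a finite group and $N\trianglelefteq G$ a normal subgroup. If $N$ and $G/N$ are mixable, then $G$ is mixable, and $\mathrm{mixlen}(G)\le\mathrm{mixlen}(N)+\mathrm{mixlen}(G/N)$.
   Context: For a finite group $G$, a random subproduct is a random element $g_1^{\epsilon_1}\cdots g_k^{\epsilon_k}$ with $g_1,\dots,g_k\in G$ fixed and $\epsilon_1,\dots,\epsilon_k$ independent Bernoulli random variables, $\epsilon_i\sim\mathrm{Ber}(p_i)$, $p_i\in[0,1]$; $k$ is its length. $G$ is mixable if some random subproduct is exactly uniform on $G$, and $\mathrm{mixlen}(G)$ is the minimal length of such. *)

(* Defs.v *)
From HB Require Import structures.
From mathcomp Require Import all_boot all_order all_fingroup all_algebra.
From mathcomp Require Import reals.
From Stdlib Require Import ClassicalEpsilon ClassicalDescription.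
Set Implicit Arguments. Unset Strict Implicit. Unset Printing Implicit Defensive.
Import GRing.Theory Num.Theory.

Local Open Scope ring_scope.

(* The probability that the random subproduct g_0^{e_0} ... g_{k-1}^{e_{k-1}}
   (e_i ~ Ber(p_i) independent) equals x. *)
Definition subprod_prob (R : realType) (gT : finGroupType) (k : nat)
  (g : 'I_k -> gT) (p : 'I_k -> R) (x : gT) : R :=
  \sum_(e : {ffun 'I_k -> bool})
     (\prod_(i < k) (if e i then p i else 1 - p i)) *
     ((\prod_(i < k) (if e i then g i else 1%g))%g == x)%:R.

Definition mixable_len (R : realType) (gT : finGroupType) (H : {group gT})
  (k : nat) : Prop :=
  exists (g : 'I_k -> gT) (p : 'I_k -> R),
    (forall i, g i \in H) /\ (forall i, 0 <= p i <= 1) /\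
    (forall x, x \in H -> subprod_prob g p x = #|H|%:R^-1).

Definition mixable (R : realType) (gT : finGroupType) (H : {group gT}) : Prop :=
  exists k, mixable_len R H k.

(* Minimal length of a uniform random subproduct (0 by convention if H is
   not mixable). *)
Definition mixlen (R : realType) (gT : finGroupType) (H : {group gT}) : nat :=
  match excluded_middle_informative
          (exists k, mixable_len R H k /\ forall j, mixable_len R H j -> (k <= j)%N)
  with
  | left h => proj1_sig (constructive_indefinite_description _ h)
  | right _ => 0%N
  end.

(* Main.v *)
Require Import Defs.
From HB Require Import structures.
From mathcomp Require Import all_boot all_order all_fingroup all_algebra.
From mathcomp Require Import reals.
From Stdlib Require Import ClassicalEpsilon ClassicalDescription.
Set Implicit Arguments. Unset Strict Implicit. Unset Printing Implicit Defensive.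
Import GRing.Theory Num.Theory.

Local Open Scope ring_scope.

Definition catf (T : Type) m l (f1 : 'I_m -> T) (f2 : 'I_l -> T) (i : 'I_(m + l)) : T :=
  match split i with inl j => f1 j | inr j => f2 j end.

Lemma catf_l T m l (f1 : 'I_m -> T) (f2 : 'I_l -> T) j : catf f1 f2 (lshift l j) = f1 j.
Proof. by rewrite /catf -[lshift l j]/(unsplit (inl _ j)) unsplitK. Qed.

Lemma catf_r T m l (f1 : 'I_m -> T) (f2 : 'I_l -> T) j : catf f1 f2 (rshift m j) = f2 j.
Proof. by rewrite /catf -[rshift m j]/(unsplit (inr _ j)) unsplitK. Qed.

Definition catb m l (e1 : {ffun 'I_m -> bool}) (e2 : {ffun 'I_l -> bool}) :
  {ffun 'I_(m + l) -> bool} := [ffun i => catf e1 e2 i].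

Lemma sum_ffun_cat (R : realType) m l (F : {ffun 'I_(m + l) -> bool} -> R) :
  \sum_(e : {ffun 'I_(m + l) -> bool}) F e =
  \sum_(e1 : {ffun 'I_m -> bool}) \sum_(e2 : {ffun 'I_l -> bool}) F (catb e1 e2).
Proof.
rewrite pair_big /=.
rewrite (reindex (fun p : {ffun 'I_m -> bool} * {ffun 'I_l -> bool} => catb p.1 p.2)) //.
exists (fun e : {ffun 'I_(m + l) -> bool} =>
          ([ffun j => e (lshift l j)], [ffun j => e (rshift m j)])) => [[e1 e2] _ | e _].
  by congr pair; apply/ffunP => j; rewrite !ffunE ?catf_l ?catf_r.
apply/ffunP => i; rewrite ffunE /catf /=.
move: (splitK i); case: (split i) => j /= <-; by rewrite ffunE.
Qed.


Lemma subprod_cat (R : realType) (gT : finGroupType) m l (g1 : 'I_m -> gT) (g2 : 'I_l -> gT)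
  (p1 : 'I_m -> R) (p2 : 'I_l -> R) x :
  subprod_prob (catf g1 g2) (catf p1 p2) x =
  \sum_(e1 : {ffun 'I_m -> bool})
     (\prod_(i < m) (if e1 i then p1 i else 1 - p1 i)) *
     subprod_prob g2 p2 (((\prod_(i < m) (if e1 i then g1 i else 1)) ^-1) * x)%g.
Proof.
rewrite /subprod_prob sum_ffun_cat; apply: eq_bigr => e1 _; rewrite big_distrr /=.
apply: eq_bigr => e2 _.
rewrite big_split_ord /= (big_split_ord (@mulg gT)) /=.
have -> : (\prod_(i < m) (if catb e1 e2 (lshift l i) then catf g1 g2 (lshift l i) else 1))%g
   = (\prod_(i < m) (if e1 i then g1 i else 1))%g.
  by apply: eq_bigr => i _; rewrite ffunE !catf_l.
have -> : (\prod_(i < l) (if catb e1 e2 (rshift m i) then catf g1 g2 (rshift m i) else 1))%g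
   = (\prod_(i < l) (if e2 i then g2 i else 1))%g.
  by apply: eq_bigr => i _; rewrite ffunE !catf_r.
have -> : (\prod_(i < m) (if catb e1 e2 (lshift l i) then catf p1 p2 (lshift l i) else 1 - catf p1 p2 (lshift l i)))
   = (\prod_(i < m) (if e1 i then p1 i else 1 - p1 i)).
  by apply: eq_bigr => i _; rewrite ffunE !catf_l.
have -> : (\prod_(i < l) (if catb e1 e2 (rshift m i) then catf p1 p2 (rshift m i) else 1 - catf p1 p2 (rshift m i)))
   = (\prod_(i < l) (if e2 i then p2 i else 1 - p2 i)).
  by apply: eq_bigr => i _; rewrite ffunE !catf_r.
set A := (\prod_(i < m) _)%g; set B := (\prod_(i < l) _)%g.
have -> : ((A * B)%g == x) = (B == (A^-1 * x)%g).
  by apply/eqP/eqP => [<-|->]; rewrite ?mulKg ?mulKVg.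
by rewrite mulrA.
Qed.

Lemma subprod_out (R : realType) (gT : finGroupType) (H : {group gT}) k (g : 'I_k -> gT)
  (p : 'I_k -> R) y : (forall i, g i \in H) -> y \notin H -> subprod_prob g p y = 0.
Proof.
move=> gH yH; rewrite /subprod_prob big1 // => e _.
case: eqP => [E|_]; last by rewrite mulr0.
case/negP: yH; rewrite -E; apply: group_prod => i _; case: (e i) => //.
Qed.

Lemma comb (R : realType) (gT : finGroupType) (G N : {group gT}) a b :
  (N <| G)%g -> mixable_len R N a -> mixable_len R (G / N)%G b ->
  mixable_len R G (b + a).
Proof.
move=> nNG [gN [pN [gNin [pN01 unifN]]]] [h [q [hin [q01 unifQ]]]].
have sNG := normal_sub nNG; have nN := normal_norm nNG.
pose gL i := odflt 1%g [pick x in G | coset N x == h i].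
have gLP i : gL i \in G /\ coset N (gL i) = h i.
  rewrite /gL; case: pickP => [x /andP[xG /eqP]|none] //=.
  by case/morphimP: (hin i) => x _ xG E; move: (none x); rewrite xG E eqxx.
exists (catf gL gN), (catf q pN); split; [|split].
- move=> i; rewrite /catf; case: (split i) => j; first by case: (gLP j).
  exact: (subsetP sNG).
- by move=> i; rewrite /catf; case: (split i) => j.
move=> x xG; rewrite subprod_cat.
have xNN : x \in 'N(N)%g by apply: (subsetP nN).
have step e1 : subprod_prob gN pN
    (((\prod_(i < b) (if e1 i then gL i else 1)) ^-1) * x)%g =
    (((\prod_(i < b) (if e1 i then h i else 1)) == coset N x)%g%:R * #|N|%:R^-1).
  set A := (\prod_(i < b) _)%g.
  have AG : A \in G by apply: group_prod => i _; case: (e1 i); case: (gLP i).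
  have AN : A \in 'N(N)%g by apply: (subsetP nN).
  have cA : coset N A = (\prod_(i < b) (if e1 i then h i else 1))%g.
    rewrite /A morph_prod; last by move=> i _; case: (e1 i); case: (gLP i) => // /(subsetP nN).
    by apply: eq_bigr => i _; case: (e1 i); [case: (gLP i)|rewrite morph1].
  rewrite -cA eq_mulVg1 -morphV // -morphM ?groupV //.
  have yNN : (A^-1 * x)%g \in 'N(N)%g by rewrite groupM ?groupV.
  case: (boolP ((A^-1 * x)%g \in N)) => yN.
    have -> : coset_morphism N (A^-1 * x)%g = 1%g by exact: coset_id.
    by rewrite eqxx mul1r unifN.
  have -> : (coset_morphism N (A^-1 * x)%g == 1%g) = false.
    by apply/eqP => /(coset_idr yNN); apply/negP.
  by rewrite mul0r (subprod_out _ gNin).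
under eq_bigr => e1 _ do rewrite step mulrA.
rewrite -big_distrl /=.
rewrite (_ : \sum_(e : {ffun 'I_b -> bool}) _ = subprod_prob h q (coset N x)) //.
rewrite unifQ ?mem_quotient //.
rewrite -invfM -natrM card_quotient // mulnC Lagrange //.
Qed.

Lemma mixlen_spec (R : realType) (gT : finGroupType) (H : {group gT}) :
  mixable R H -> mixable_len R H (mixlen R H) /\
  forall j, mixable_len R H j -> (mixlen R H <= j)%N.
Proof.
move=> mH; rewrite /mixlen; case: excluded_middle_informative => [hh|nh].
  by case: (constructive_indefinite_description _ hh).
exfalso; apply: nh.
pose P := fun n => if excluded_middle_informative (mixable_len R H n) then true else false.
have PE n : P n <-> mixable_len R H n.
  by rewrite /P; case: excluded_middle_informative.
have exP : exists n, P n by case: mH => k hk; exists k; apply/PE.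
case: (ex_minnP exP) => n Pn minn; exists n; split; first by apply/PE.
by move=> j /PE; apply: minn.
Qed.

Theorem mainTheorem11 (R : realType) (gT : finGroupType) (G N : {group gT}) :
  (N <| G)%g ->
  mixable R N -> mixable R (G / N)%G ->
  mixable R G /\ (mixlen R G <= mixlen R N + mixlen R (G / N)%G)%N.
Proof.
move=> nNG mN mQ.
case: (mixlen_spec mN) => hN _; case: (mixlen_spec mQ) => hQ _.
have hG := comb nNG hN hQ.
have mG : mixable R G by exists (mixlen R (G / N)%G + mixlen R N)%N.
split=> //; rewrite addnC; exact: (proj2 (mixlen_spec mG)).
Qed.
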